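(* Let $f(r)$ denote the minimum number of edges of an $r$-partite intersecting hypergraph $\mathcal{H}$ with $\tau(\mathcal{H}) \ge r-1$. Then $f(4)=6$, $f(5)=9$, and $12 \le f(6) \le 15$.
   Context: A hypergraph is $r$-partite if its vertex set can be partitioned into $r$ parts such that every edge contains precisely one vertex from each part. A hypergraph is intersecting if every two edges have nonempty intersection. The cover number $\tau(\mathcal{H})$ is the minimum size of a vertex set meeting every edge. *)

(* Defs.v *)
From mathcomp Require Import all_boot.
Set Implicit Arguments. Unset Strict Implicit. Unset Printing Implicit Defensive.

(* It is r-partite w.r.t. the partition of the vertex set given by
   part : T -> 'I_r (parts = fibres of part) if every edge contains
   precisely one vertex from each part. *)
Definition rpartite (r : nat) (T : finType) (part : T -> 'I_r)
    (E : {set {set T}}) : Prop :=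
  forall e, e \in E -> forall i : 'I_r, #|[set v in e | part v == i]| = 1.

Definition intersecting (T : finType) (E : {set {set T}}) : Prop :=
  forall e1 e2, e1 \in E -> e2 \in E -> e1 :&: e2 != set0.

Definition is_cover (T : finType) (E : {set {set T}}) (C : {set T}) : Prop :=
  forall e, e \in E -> C :&: e != set0.

Definition tau_ge (T : finType) (E : {set {set T}}) (k : nat) : Prop :=
  forall C : {set T}, is_cover E C -> k <= #|C|.

Definition admissible (r : nat) (T : finType) (part : T -> 'I_r)
    (E : {set {set T}}) : Prop :=
  [/\ rpartite part E, intersecting E & tau_ge E (r - 1)].

Definition f_le (r m : nat) : Prop :=
  exists (T : finType) (part : T -> 'I_r) (E : {set {set T}}),
    admissible part E /\ #|E| <= m.

Definition f_ge (r m : nat) : Prop :=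
  forall (T : finType) (part : T -> 'I_r) (E : {set {set T}}),
    admissible part E -> m <= #|E|.

Definition f_eq (r m : nat) : Prop := f_le r m /\ f_ge r m.

(* Main.v *)
Require Import Defs.
From mathcomp Require Import all_boot.
From mathcomp Require Import zify.
Set Implicit Arguments. Unset Strict Implicit. Unset Printing Implicit Defensive.

Lemma dd2 d : d * d.-1 = 2 * 'C(d,2).
Proof. elim: d => [|d IH] //. rewrite binS bin1 /=. case: d IH => [|d] IH //=. nia. Qed.

Definition LB r k N := forall (T : finType) (part : T -> 'I_r) (E : {set {set T}}),
  rpartite part E -> intersecting E -> tau_ge E k -> N <= #|E|.

Lemma tau_ge_mono (T : finType) (E : {set {set T}}) a b :
  tau_ge E a -> b <= a -> tau_ge E b.
Proof. move=> H ba C HC; exact: leq_trans ba (H C HC). Qed.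

Lemma LB0 r : LB r 0 0. Proof. by []. Qed.

Lemma LB1 r : LB r 1 1.
Proof.
move=> T part E _ _ H; rewrite lt0n; apply/negP => /eqP /cards0_eq E0.
suff: 1 <= #|(set0 : {set T})| by rewrite cards0.
apply: H => e; by rewrite E0 inE.
Qed.

Lemma meet_sub (T : finType) (A B e : {set T}) :
  A \subset B -> A :&: e != set0 -> B :&: e != set0.
Proof.
move=> sAB /set0Pn [x]; rewrite inE => /andP [xA xe]; apply/set0Pn; exists x.
by rewrite inE xe (subsetP sAB _ xA).
Qed.

Lemma sum_bool_card (T : finType) (P Q : pred T) :
  \sum_(v | P v) (Q v : nat) = #|[set v | P v && Q v]|.
Proof.
rewrite -sum1dep_card big_mkcondr /=; apply: eq_bigr => v _; by case: (Q v).
Qed.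

Lemma pt d D : d <= D -> D <= 3 -> d * d.-1 <= d * (minn D 2 - 1) + 3 * (2 < d).
Proof. by case: d => [|[|[|[|d]]]]; case: D => [|[|[|[|D]]]]. Qed.

Section Count.
Variables (r : nat) (T : finType) (part : T -> 'I_r) (E : {set {set T}}).
Hypotheses (HP : rpartite part E) (HI : intersecting E).

Definition deg (v : T) : nat := \sum_(e in E) (v \in e).
Definition avoid (S : {set T}) := [set e in E | e :&: S == set0].
Definition S3 (i : 'I_r) := [set v | (part v == i) && (2 < deg v)].

Lemma avoid_sub S : avoid S \subset E.
Proof. by apply/subsetP => e; rewrite inE => /andP []. Qed.
Lemma rp_sub (E' : {set {set T}}) : E' \subset E -> rpartite part E'.
Proof. move=> /subsetP sE e /sE; exact: HP. Qed.
Lemma int_sub (E' : {set {set T}}) : E' \subset E -> intersecting E'.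
Proof. move=> /subsetP sE e1 e2 /sE h1 /sE h2; exact: HI. Qed.

Lemma tau_avoid S k : tau_ge E k -> tau_ge (avoid S) (k - #|S|).
Proof.
move=> H C HC.
have: k <= #|C :|: S|.
  apply: H => e eE.
  case: (boolP (e :&: S == set0)) => eS.
  - have: e \in avoid S by rewrite inE eE eS.
    by move/HC; apply: meet_sub; apply: subsetUl.
  - by apply: (meet_sub (subsetUr C S)); rewrite setIC.
have := leq_card_setU C S; case=> h _ hk; lia.
Qed.

Lemma part_one e i : e \in E -> \sum_(v | part v == i) (v \in e : nat) = 1.
Proof.
move=> eE; rewrite sum_bool_card -(HP eE i); apply: eq_card => v.
by rewrite !inE andbC.
Qed.

Lemma part_deg i : \sum_(v | part v == i) deg v = #|E|.
Proof.
rewrite /deg exchange_big /= -sum1_card; apply: eq_bigr => e eE.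
exact: part_one.
Qed.

Lemma cover_bound (S : {set T}) i k N :
  (forall v, v \in S -> part v = i) -> tau_ge E k -> LB r (k - #|S|) N ->
  \sum_(v in S) deg v + N <= #|E|.
Proof.
move=> HS Hk HL.
have h1 : N <= #|avoid S|.
  exact: (HL T part (avoid S)) (rp_sub (avoid_sub S)) (int_sub (avoid_sub S)) (tau_avoid (S:=S) Hk).
have h3 : #|E| = #|avoid S| + #|E :\: avoid S|.
  by rewrite -(cardsID (avoid S) E) (setIidPr (avoid_sub S)).
suff h2 : \sum_(v in S) deg v <= #|E :\: avoid S| by lia.
rewrite /deg exchange_big /=.
rewrite -sum1_card (bigID (fun e => e \in avoid S)) /=.
rewrite [X in _ <= X](bigID (fun e => e \in avoid S)) /=.
have -> : \sum_(i0 in E | i0 \in avoid S) \sum_(i1 in S) (i1 \in i0 : nat) = 0.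
  apply/eqP; rewrite sum_nat_eq0; apply/forallP => e; apply/implyP => /andP [_].
  rewrite inE => /andP [_ /eqP eS].
  rewrite sum_nat_eq0; apply/forallP => v; apply/implyP => vS.
  case: (boolP (v \in e)) => // ve.
  have : v \in e :&: S by rewrite inE ve vS.
  by rewrite eS inE.
rewrite add0n.
apply: leq_trans (leq_addl _ _).
rewrite [X in _ <= X](eq_bigl (fun e => (e \in E) && (e \notin avoid S))); last first.
  by move=> e /=; rewrite in_setD; case: (e \in avoid S); case: (e \in E).
apply: leq_sum => e /andP [eE _].
rewrite -(part_one i eE) (big_mkcond (fun v => v \in S)) /= [X in _ <= X]big_mkcond /=.
apply: leq_sum => v _.
case: (boolP (v \in S)) => vS //.
by rewrite (HS v vS) eqxx.
Qed.

Lemma pairs : #|E| * #|E|.-1 <= \sum_v deg v * (deg v).-1.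
Proof.
have -> : \sum_v deg v * (deg v).-1 = \sum_(e in E) \sum_v (v \in e) * (deg v).-1.
  rewrite exchange_big /=; apply: eq_bigr => v _; by rewrite /deg big_distrl.
rewrite -sum_nat_const; apply: leq_sum => e eE.
have hd : forall v, (v \in e) * (deg v).-1 =
   \sum_(e' in E | e' != e) ((v \in e) && (v \in e') : nat).
  move=> v; case: (boolP (v \in e)) => ve /=; last first.
    by rewrite mul0n big1.
  rewrite mul1n /deg (bigD1 e eE) /= ve /= ?add1n /= ?add0n.
  by apply: eq_bigr.
rewrite (eq_bigr _ (fun v _ => hd v)) exchange_big /=.
have -> : #|E|.-1 = \sum_(e' in E | e' != e) 1.
  by rewrite -sum1_card (bigD1 e eE) /= ?add1n /= ?add0n.
apply: leq_sum => e' /andP [e'E _].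
have /set0Pn [x] := HI eE e'E; rewrite inE => /andP [xe xe'].
by rewrite (bigD1 x) //= xe xe'.
Qed.

Lemma main_count D tm : 0 < r -> (forall v, deg v <= D) -> D <= 3 ->
  (forall i, #|S3 i| <= tm) ->
  #|E| * #|E|.-1 <= r * (2 * ((#|E| * (minn D 2 - 1) + 3 * ((2 < D) * tm)) %/ 2))
  /\ (D = 0 -> #|E| = 0).
Proof.
move=> r0 HD D3 Ht; split; last first.
  move=> D0; have := part_deg (Ordinal r0); move=> <-.
  by apply: big1 => v _; have := HD v; rewrite D0; lia.
apply: leq_trans pairs _.
rewrite (partition_big part xpredT) //=.
set X := #|E| * _ + _.
apply: (@leq_trans (\sum_(i < r) (2 * (X %/ 2)))); last first.
  by rewrite sum_nat_const card_ord.
apply: leq_sum => i _.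
rewrite (eq_bigl (fun v => part v == i)) //.
rewrite (eq_bigr (fun v => 2 * 'C(deg v, 2))); last by move=> v _; rewrite dd2.
rewrite -big_distrr /=.
set q := \sum_(v | _) _.
suff : 2 * q <= X by lia.
rewrite big_distrr /=.
apply: (@leq_trans (\sum_(v | part v == i) (deg v * (minn D 2 - 1) + 3 * (2 < deg v)))).
  apply: leq_sum => v _; rewrite -dd2.
  exact: pt (HD v) D3.
rewrite big_split /= -big_distrl /= part_deg -big_distrr /= sum_bool_card.
rewrite /X leq_add2l leq_mul2l /=.
case: (boolP (2 < D)) => hD.
  by rewrite mul1n; apply: Ht.
rewrite mul0n leqn0 cards_eq0; apply/eqP/setP => v; rewrite !inE.
apply/negP => /andP [_]; have := HD v; lia.
Qed.

End Count.


Lemma level_gen r k Nk tm (Nf : nat -> nat) :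
  0 < r -> 0 < k ->
  (forall j, j < k -> LB r j (Nf j)) ->
  all (fun n => all (fun t => n < 3*t + Nf (k-t)) (iota tm.+1 n))
      (iota (Nf k.-1) (Nk - Nf k.-1)) ->
  all (fun n => (n - Nf k.-1 <= 3) &&
     ((r * (2 * ((n * (minn (n - Nf k.-1) 2 - 1) + 3 * ((2 < n - Nf k.-1) * tm)) %/ 2))
        < n * n.-1) || ((n - Nf k.-1 == 0) && (n != 0))))
      (iota (Nf k.-1) (Nk - Nf k.-1)) ->
  LB r k Nk.
Proof.
move=> r0 k0 HL Ct Cn T part E HP HI H.
rewrite leqNgt; apply/negP => HnN.
have Hprev : Nf k.-1 <= #|E|.
  apply: (HL k.-1 _ T part E HP HI); first lia.
  apply: tau_ge_mono H _; lia.
have Hin : #|E| \in iota (Nf k.-1) (Nk - Nf k.-1) by rewrite mem_iota; lia.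
have Hdeg : forall v, deg E v <= #|E| - Nf k.-1.
  move=> v.
  have := @cover_bound r T part E HP HI [set v] (part v) k (Nf k.-1).
  rewrite big_set1 cards1 subn1.
  move=> h; have := h _ H (HL _ _); move=> {}h.
  suff: deg E v + Nf k.-1 <= #|E| by lia.
  apply: h; first by move=> w; rewrite inE => /eqP ->.
  lia.
have Ht : forall i, #|S3 part E i| <= tm.
  move=> i; rewrite leqNgt; apply/negP => Hti.
  set t := #|S3 part E i| in Hti.
  have h := @cover_bound r T part E HP HI (S3 part E i) i k (Nf (k - t)).
  have : \sum_(v in S3 part E i) deg E v + Nf (k - t) <= #|E|.
    apply: h H (HL _ _); last by lia.
    by move=> v; rewrite inE => /andP [/eqP].
  have : t * 3 <= \sum_(v in S3 part E i) deg E v.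
    rewrite -sum_nat_const; apply: leq_sum => v; rewrite inE => /andP [_]; lia.
  move=> h1 h2.
  case: (leqP t #|E|) => htn; last by lia.
  move: Ct => /allP /(_ _ Hin) /allP /(_ t).
  rewrite mem_iota => /(_ ltac:(lia)); lia.
move: Cn => /allP /(_ _ Hin) /andP [D3 Cn].
have [Hc Hz] := main_count HP HI r0 Hdeg D3 Ht.
move: Cn Hz Hc; move: (#|E|) => n; move: (n - Nf k.-1) => D.
move=> /orP [h|/andP [/eqP h1 h2]] Hz Hc.
  by move: h; rewrite ltnNge Hc.
by move: (Hz h1) h2 => ->.
Qed.


Lemma ext_lb r k (Nf : nat -> nat) : (forall j, j < k -> LB r j (Nf j)) ->
  LB r k (Nf k) -> forall j, j < k.+1 -> LB r j (Nf j).
Proof. move=> H Hk j; rewrite ltnS leq_eqVlt => /orP [/eqP ->|]; [exact: Hk|exact: H]. Qed.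

Lemma base_lb r (Nf : nat -> nat) : Nf 0 = 0 -> forall j, j < 1 -> LB r j (Nf j).
Proof. move=> h0 [|j] // _; rewrite h0; exact: LB0. Qed.

Definition Nf6 j := nth 0 [:: 0; 1; 3; 5; 8; 12] j.
Definition Nf5 j := nth 0 [:: 0; 1; 3; 5; 9] j.
Definition Nf4 j := nth 0 [:: 0; 1; 3; 6] j.

Lemma LB6 : forall j, j < 6 -> LB 6 j (Nf6 j).
Proof.
have h1 := ext_lb (base_lb (r:=6) (Nf := Nf6) erefl) (@LB1 6).
have h2 := ext_lb h1 (@level_gen 6 2 3 0 Nf6 erefl erefl h1 erefl erefl).
have h3 := ext_lb h2 (@level_gen 6 3 5 0 Nf6 erefl erefl h2 erefl erefl).
have h4 := ext_lb h3 (@level_gen 6 4 8 0 Nf6 erefl erefl h3 erefl erefl).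
exact: ext_lb h4 (@level_gen 6 5 12 2 Nf6 erefl erefl h4 erefl erefl).
Qed.

Lemma LB5 : forall j, j < 5 -> LB 5 j (Nf5 j).
Proof.
have h1 := ext_lb (base_lb (r:=5) (Nf := Nf5) erefl) (@LB1 5).
have h2 := ext_lb h1 (@level_gen 5 2 3 0 Nf5 erefl erefl h1 erefl erefl).
have h3 := ext_lb h2 (@level_gen 5 3 5 0 Nf5 erefl erefl h2 erefl erefl).
exact: ext_lb h3 (@level_gen 5 4 9 1 Nf5 erefl erefl h3 erefl erefl).
Qed.

Lemma LB4 : forall j, j < 4 -> LB 4 j (Nf4 j).
Proof.
have h1 := ext_lb (base_lb (r:=4) (Nf := Nf4) erefl) (@LB1 4).
have h2 := ext_lb h1 (@level_gen 4 2 3 0 Nf4 erefl erefl h1 erefl erefl).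
exact: ext_lb h2 (@level_gen 4 3 6 0 Nf4 erefl erefl h2 erefl erefl).
Qed.

Lemma fge_of r m : LB r (r - 1) m -> f_ge r m.
Proof. move=> H T part E [HP HI Ht]; exact: H HP HI Ht. Qed.

Lemma fge6 : f_ge 6 12. Proof. exact: fge_of (LB6 (j:=5) erefl). Qed.
Lemma fge5 : f_ge 5 9. Proof. exact: fge_of (LB5 (j:=4) erefl). Qed.
Lemma fge4 : f_ge 4 6. Proof. exact: fge_of (LB4 (j:=3) erefl). Qed.


Section Words.
Variables (r q : nat).
Definition edge (w : seq nat) : {set 'I_r * 'I_q.+1} :=
  [set p : 'I_r * 'I_q.+1 | p.2 == inord (nth 0 w p.1)].
Definition EW (W : seq (seq nat)) := [set e in map edge W].
Definition wpart (p : 'I_r * 'I_q.+1) : 'I_r := p.1.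

Fixpoint cov (k : nat) (ws : seq (seq nat)) : bool :=
  match k with
  | 0 => nilp ws
  | k'.+1 => match ws with
    | [::] => true
    | e :: rest => has (fun i => cov k' [seq w <- rest | nth 0 w i != nth 0 e i]) (iota 0 r)
    end
  end.

Definition bnd (ws : seq (seq nat)) := all (fun w => all (fun x => x <= q) w) ws.

Lemma nth_bnd ws w i : bnd ws -> w \in ws -> nth 0 w i <= q.
Proof.
move=> /allP /(_ w) h /h /allP hw.
case: (ltnP i (size w)) => hi; first by apply: hw; exact: mem_nth.
by rewrite nth_default.
Qed.

Lemma cov_sound k : forall ws (C : {set 'I_r * 'I_q.+1}), bnd ws ->
  (forall w, w \in ws -> C :&: edge w != set0) -> #|C| <= k -> cov k ws.
Proof.
elim: k => [|k IH] ws C Hb Hc HC.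
  case: ws Hb Hc => [|w ws] //= Hb Hc.
  move: HC; rewrite leqn0 cards_eq0 => /eqP C0.
  by have := Hc w; rewrite inE eqxx C0 set0I eqxx => /(_ isT).
case: ws Hb Hc => [|e rest] // Hb Hc.
have Hr : bnd rest by move: Hb; rewrite /bnd /= => /andP [].
have /set0Pn [p] := Hc e (mem_head _ _); rewrite !inE => /andP [pC /eqP pe].
apply/hasP; exists (val p.1); first by rewrite mem_iota /= add0n ltn_ord.
apply: (IH _ (C :\ p)).
- apply/allP => w; rewrite mem_filter => /andP [_ wr]; exact: (allP Hr w wr).
- move=> w; rewrite mem_filter => /andP [hne wr].
  have /set0Pn [x] := Hc w ltac:(by rewrite inE wr orbT); rewrite !inE => /andP [xC /eqP xw].
  apply/set0Pn; exists x; rewrite !inE xC xw eqxx andbT andbT.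
  apply/negP => /eqP xp; move: hne; rewrite xp in xw.
  have he : nth 0 e p.1 <= q by apply: (nth_bnd _ Hb); exact: mem_head.
  have hw : nth 0 w p.1 <= q.
    by apply: (nth_bnd _ Hb); rewrite inE wr orbT.
  by rewrite -(@inordK q _ he) -(@inordK q _ hw) -pe -xw eqxx.
- move: HC; rewrite (cardsD1 p C) pC; lia.
Qed.

Lemma EW_rp W : rpartite wpart (EW W).
Proof.
move=> e; rewrite inE => /mapP [w _ ->] i.
rewrite -(cards1 (i, inord (nth 0 w i) : 'I_q.+1)); apply: eq_card => p.
case: p => a b; rewrite !inE /= xpair_eqE /wpart /=.
case: (boolP (a == i)) => [/eqP ->|]; by rewrite ?andbT ?andbF.
Qed.

Lemma EW_int W :
  all (fun w1 => all (fun w2 => has (fun i => nth 0 w1 i == nth 0 w2 i) (iota 0 r)) W) W ->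
  intersecting (EW W).
Proof.
move=> H e1 e2; rewrite !inE => /mapP [w1 h1 ->] /mapP [w2 h2 ->].
move: H => /allP /(_ _ h1) /allP /(_ _ h2) /hasP [i]; rewrite mem_iota add0n => /andP [_ hi] /eqP he.
apply/set0Pn; exists (Ordinal hi, inord (nth 0 w1 i)); rewrite !inE /= he eqxx.
by [].
Qed.

Lemma EW_tau W : bnd W -> ~~ cov (r - 2) W -> tau_ge (EW W) (r - 1).
Proof.
move=> Hb Hc C HC; rewrite leqNgt; apply/negP => hlt.
move: Hc; rewrite (@cov_sound (r - 2) W C Hb) //; last by lia.
move=> w hw; apply: HC; rewrite inE; exact: map_f.
Qed.

Lemma EW_card W : #|EW W| <= size W.
Proof. by rewrite cardsE -(size_map edge); apply: card_size. Qed.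

End Words.

Lemma fle_of r q m W :
  bnd q W ->
  all (fun w1 => all (fun w2 => has (fun i => nth 0 w1 i == nth 0 w2 i) (iota 0 r)) W) W ->
  ~~ cov r (r - 2) W -> size W <= m -> f_le r m.
Proof.
move=> Hb Hi Hc Hs.
exists ('I_r * 'I_q.+1)%type, (@wpart r q), (EW r q W); split; last first.
  exact: leq_trans (EW_card r q W) Hs.
split; [exact: EW_rp | exact: EW_int | exact: EW_tau].
Qed.

Definition W4 := [:: [:: 0; 1; 2; 1]; [:: 0; 2; 1; 2]; [:: 1; 2; 2; 0]; [:: 0; 0; 0; 0]; [:: 2; 0; 2; 2]; [:: 1; 0; 1; 1]].
Definition W5 := [:: [:: 1; 3; 2; 3; 0]; [:: 3; 1; 2; 0; 1]; [:: 0; 0; 0; 0; 0]; [:: 3; 3; 0; 1; 2]; [:: 0; 2; 2; 1; 3]; [:: 1; 1; 0; 2; 3]; [:: 1; 2; 3; 0; 2]; [:: 2; 3; 1; 0; 3]; [:: 3; 2; 1; 2; 0]].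
Definition W6 := [:: [:: 0; 1; 4; 2; 3; 1]; [:: 2; 1; 1; 4; 0; 3]; [:: 0; 2; 3; 4; 1; 2]; [:: 1; 0; 1; 1; 1; 1]; [:: 0; 3; 2; 1; 4; 3]; [:: 3; 1; 2; 0; 1; 4]; [:: 2; 4; 3; 0; 4; 1]; [:: 3; 4; 4; 1; 0; 2]; [:: 1; 1; 0; 3; 4; 2]; [:: 2; 0; 2; 2; 2; 2]; [:: 0; 4; 1; 3; 2; 4]; [:: 3; 0; 3; 3; 3; 3]; [:: 0; 0; 0; 0; 0; 0]; [:: 4; 2; 2; 3; 0; 1]; [:: 3; 3; 0; 4; 2; 1]].

Lemma fle4 : f_le 4 6.
Proof. apply: (@fle_of 4 2 6 W4); by vm_compute. Qed.
Lemma fle5 : f_le 5 9.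
Proof. apply: (@fle_of 5 3 9 W5); by vm_compute. Qed.
Lemma fle6 : f_le 6 15.
Proof. apply: (@fle_of 6 4 15 W6); by vm_compute. Qed.


Theorem theorem2 :
  f_eq 4 6 /\ f_eq 5 9 /\ (f_ge 6 12 /\ f_le 6 15).
Proof.
split; first by split; [exact: fle4 | exact: fge4].
split; first by split; [exact: fle5 | exact: fge5].
split; [exact: fge6 | exact: fle6].
Qed.
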